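(* Assume $\mathrm{recc}(C)\subseteq\mathrm{recc}(P^B)$. Let $D\subseteq N_1\cup N_2$. If $M_D=\emptyset$, then $\mathrm{cl}\,\mathrm{conv}(P^B\setminus G_D^C)=P^B$.
   Context: Let $A\in\mathbb{R}^{m\times n}$ have full row rank, $b\in\mathbb{R}^m$, and $P=\{x\in\mathbb{R}^n_+:Ax=b\}$. Let $C\subseteq\mathbb{R}^n$ be an open convex set. Fix a basis $B$ of $P$ with nonbasic set $N=\{1,\dots,n\}\setminus B$. Write $P=\{x:x_i=\bar b_i-\sum_{j\in N}\bar a_{ij}x_j\ (i\in B),\ x\ge0\}$ with $\bar b\ge0$. The basic solution $\bar x$ has $\bar x_i=\bar b_i$ ($i\in B$) and $0$ ($i\in N$). $P^B$ is obtained by dropping $x_i\ge0$ for $i\in B$. For $j\in N$, $\bar r^j$ has $\bar r^j_k=-\bar a_{kj}$ ($k\in B$), $\bar r^j_j=1$, and $0$ otherwise. Thus $P^B=\{\bar x+\sum_{j\in N}x_j\bar r^j:x_j\ge0\}$. It is assumed that $\bar x\notin\mathrm{cl}(C)$. For $j\in N$, $\alpha_j=\inf\{\lambda\ge0:\bar x+\lambda\bar r^j\in C\}$ and $\beta_j=\sup\{\lambda\ge0:\bar x+\lambda\bar r^j\in C\}$, with $\alpha_j=+\infty$, $\beta_j=-\infty$ if the halfline misses $C$. Define - $N_1=\{j:\alpha_j\in(0,\infty),\beta_j=+\infty\}$; - $N_2=\{j:\alpha_j\in(0,\infty),\beta_j\in(\alpha_j,\infty)\}$. For a set $K$, $\mathrm{recc}(K)=\{d:x+\lambda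 d\in K\ \forall x\in K,\lambda\ge0\}$. $G_D^C=\{\bar x\}+\mathrm{conv}\big(\bigcup_{j\in D}\{\lambda\bar r^j:\lambda>\alpha_j\}\big)+\mathrm{recc}(C)$. For $(i,j)\in D\times(N\setminus D)$, $\gamma_{ij}=\sup\{\gamma\ge0:\alpha_i\bar r^i+\gamma\bar r^j\in\mathrm{recc}(G_D^C)\}$. Let $M_D=\{i\in D:\gamma_{ij}>0\ \forall j\in N\setminus D\}$. Here $\mathrm{cl}\,\mathrm{conv}$ is the closure of the convex hull. *)

(* Defs.v *)
From mathcomp Require Import all_boot all_order all_algebra.
From mathcomp Require Import all_classical all_reals all_analysis.
Import numFieldNormedType.Exports.
Import Order.TTheory GRing.Theory Num.Theory.
Set Implicit Arguments. Unset Strict Implicit. Unset Printing Implicit Defensive.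
Local Open Scope classical_set_scope.
Local Open Scope ring_scope.

Section Generic.
Variables (R : realType) (n : nat).
Implicit Types (S T K : set 'cV[R]_n).

Definition convex_set_cv S : Prop :=
  forall x y, S x -> S y -> forall t : R, 0 <= t -> t <= 1 ->
    S (t *: x + (1 - t) *: y).

Definition conv_hull S : set 'cV[R]_n :=
  [set x | forall T, convex_set_cv T -> S `<=` T -> T x].

Definition msum S T : set 'cV[R]_n :=
  [set z | exists x, S x /\ exists y, T y /\ z = x + y].

Definition recc K : set 'cV[R]_n :=
  [set d | forall x, K x -> forall l : R, 0 <= l -> K (x + l *: d)].
End Generic.

Section Tableau.
Variables (R : realType) (m n : nat) (A : 'M[R]_(m, n)) (b : 'cV[R]_m)
  (sigma : 'I_m -> 'I_n).

Definition Bset : set 'I_n := range sigma.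
Definition Nset : set 'I_n := ~` Bset.

Definition AB : 'M[R]_m := \matrix_(i, k) A i (sigma k).

Definition is_basis : Prop := injective sigma /\ AB \in unitmx.

Definition bbar : 'cV[R]_m := invmx AB *m b.
(* abar k j = \bar a_{sigma k, j} *)
Definition abar : 'M[R]_(m, n) := invmx AB *m A.

Definition feasible_basis : Prop := is_basis /\ forall k, 0 <= bbar k 0.

Definition xbar : 'cV[R]_n :=
  \col_i \sum_(k < m | sigma k == i) bbar k 0.

Definition rbar (j : 'I_n) : 'cV[R]_n :=
  \col_i ((i == j)%:R - \sum_(k < m | sigma k == i) abar k j).

(* P^B: tableau description of P with x_i >= 0 dropped for i in B *)
Definition PB : set 'cV[R]_n :=
  [set x | (forall k : 'I_m,
              x (sigma k) 0 = bbar k 0 - \sum_(j < n | j \in Nset) abar k j * x j 0)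
           /\ (forall j, Nset j -> 0 <= x j 0)].

Variable C : set 'cV[R]_n.

Definition ray_params (j : 'I_n) : set R :=
  [set l | 0 <= l /\ C (xbar + l *: rbar j)].

Definition alpha (j : 'I_n) : \bar R := ereal_inf [set l%:E | l in ray_params j].
Definition beta (j : 'I_n) : \bar R := ereal_sup [set l%:E | l in ray_params j].

Definition N1 : set 'I_n :=
  [set j | Nset j /\ (0 < alpha j)%E /\ (alpha j < +oo)%E /\ beta j = +oo%E].
Definition N2 : set 'I_n :=
  [set j | Nset j /\ (0 < alpha j)%E /\ (alpha j < +oo)%E /\
           (alpha j < beta j)%E /\ (beta j < +oo)%E].

Definition G_DC (D : set 'I_n) : set 'cV[R]_n :=
  msum (msum [set xbar]
     (conv_hull (\bigcup_(j in D) [set l *: rbar j | l in [set l : R | (alpha j < l%:E)%E]])))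
     (recc C).

Definition gamma (D : set 'I_n) (i j : 'I_n) : \bar R :=
  ereal_sup [set g%:E | g in
     [set g : R | 0 <= g /\ recc (G_DC D) (fine (alpha i) *: rbar i + g *: rbar j)]].

Definition M_D (D : set 'I_n) : set 'I_n :=
  [set i | D i /\ forall j, Nset j -> ~ D j -> (0 < gamma D i j)%E].
End Tableau.

(* Main.v *)
Require Import Defs.
From mathcomp Require Import all_boot all_order all_algebra.
From mathcomp Require Import all_classical all_reals all_analysis.
Import numFieldNormedType.Exports.
Import Order.TTheory GRing.Theory Num.Theory.
Local Open Scope classical_set_scope.
Local Open Scope ring_scope.
From mathcomp Require Import ring lra.
Set Implicit Arguments. Unset Strict Implicit. Unset Printing Implicit Defensive.

Section Generic.
Variables (R : realType) (n : nat).
Implicit Types (S T K : set 'cV[R]_n).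

Lemma conv_convex S : convex_set_cv (conv_hull S).
Proof.
move=> x y Hx Hy t t0 t1 T cT ST; exact: cT (Hx T cT ST) (Hy T cT ST) t t0 t1.
Qed.

Lemma sub_conv S : S `<=` conv_hull S.
Proof. by move=> x Sx T _ ST; apply: ST. Qed.

Lemma conv_min S T : convex_set_cv T -> S `<=` T -> conv_hull S `<=` T.
Proof. by move=> cT ST x /(_ T cT ST). Qed.

Lemma recc_add K d1 d2 : recc K d1 -> recc K d2 -> recc K (d1 + d2).
Proof.
move=> h1 h2 x Kx l l0; rewrite scalerDr addrA; exact: h2 (h1 x Kx l l0) l l0.
Qed.

Lemma recc_scale K c d : 0 <= c -> recc K d -> recc K (c *: d).
Proof.
move=> c0 h x Kx l l0; rewrite scalerA; apply: h => //; exact: mulr_ge0.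
Qed.

Lemma convex_comb (I : Type) T (y0 : 'cV[R]_n) (y : I -> 'cV[R]_n) :
  convex_set_cv T -> T y0 -> (forall j, T (y j)) ->
  forall s : seq I, T ((size s).+1%:R^-1 *: (y0 + \sum_(j <- s) y j)).
Proof.
move=> cT T0 Ty; elim=> [|a s IH].
  by rewrite big_nil addr0 /= invr1 scale1r.
rewrite big_cons /=.
set k := size s.
have k1 : (0 : R) < k.+1%:R by rewrite ltr0Sn.
have k2 : (0 : R) < k.+2%:R by rewrite ltr0Sn.
have -> : k.+2%:R^-1 *: (y0 + (y a + \sum_(j <- s) y j)) =
   k.+2%:R^-1 *: y a + (1 - k.+2%:R^-1) *: (k.+1%:R^-1 *: (y0 + \sum_(j <- s) y j)).
  rewrite scalerA.
  have -> : (1 - k.+2%:R^-1) * k.+1%:R^-1 = k.+2%:R^-1 :> R.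
    rewrite -[k.+2]addn1 natrD -[k.+1]addn1 natrD.
    have := ler0n R k => kp.
    by field; apply/andP; split; apply: lt0r_neq0; lra.
  by rewrite -scalerDr addrCA.
apply: cT => //.
by rewrite invf_le1 // ler1n.
Qed.

End Generic.

Section Tab.
Variables (R : realType) (m n : nat) (A : 'M[R]_(m, n)) (b : 'cV[R]_m)
  (sigma : 'I_m -> 'I_n).
Hypothesis inj : injective sigma.
Hypothesis bpos : forall k, 0 <= bbar A b sigma k 0.

Local Notation xb := (xbar A b sigma).
Local Notation rb := (rbar A sigma).
Local Notation ab := (abar A sigma).
Local Notation bb := (bbar A b sigma).
Local Notation NN := (Nset sigma).
Local Notation PP := (PB A b sigma).

Lemma eD (x y : 'cV[R]_n) i : (x + y) i 0 = x i 0 + y i 0.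
Proof. by rewrite mxE. Qed.
Lemma eZ a (x : 'cV[R]_n) i : (a *: x) i 0 = a * x i 0.
Proof. by rewrite mxE. Qed.

Lemma eN (x : 'cV[R]_n) i : (- x) i 0 = - x i 0.
Proof. by rewrite mxE. Qed.

Lemma NsetP j : NN j -> forall k, sigma k != j.
Proof. move=> Nj k; apply/eqP => e; apply: Nj; by exists k. Qed.

Lemma notN j : ~ NN j -> exists k, sigma k = j.
Proof.
move=> h; have : Bset sigma j by apply: contrapT.
by case=> k _ e; exists k.
Qed.

Lemma sum_sig_N j (F : 'I_m -> R) : NN j -> \sum_(k < m | sigma k == j) F k = 0.
Proof. move=> Nj; rewrite big_pred0 // => k; exact/negbTE/NsetP. Qed.

Lemma sum_sig_B k0 (F : 'I_m -> R) : \sum_(k < m | sigma k == sigma k0) F k = F k0.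
Proof.
rewrite (big_pred1 k0) // => k /=; apply/eqP/eqP => [/inj|->] //.
Qed.

Lemma xbN j : NN j -> xb j 0 = 0.
Proof. by move=> Nj; rewrite /xbar mxE sum_sig_N. Qed.

Lemma xbB k : xb (sigma k) 0 = bb k 0.
Proof. by rewrite /xbar mxE sum_sig_B. Qed.

Lemma rbN j l : NN l -> rb j l 0 = (l == j)%:R.
Proof. by move=> Nl; rewrite /rbar mxE sum_sig_N // subr0. Qed.

Lemma rbB j k : NN j -> rb j (sigma k) 0 = - ab k j.
Proof.
move=> Nj; rewrite /rbar mxE sum_sig_B.
by rewrite (negbTE (NsetP Nj k)) sub0r.
Qed.

Definition hom (d : 'cV[R]_n) := forall k,
  d (sigma k) 0 = - \sum_(j < n | j \in NN) ab k j * d j 0.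

Lemma hom_unique u v : hom u -> hom v ->
  (forall j, NN j -> u j 0 = v j 0) -> u = v.
Proof.
move=> hu hv e; apply/matrixP => i z; rewrite [z]ord1.
have [Ni|Ni] := pselect (NN i); first exact: e.
have [k <-] := notN Ni.
rewrite hu hv; congr (- _); apply: eq_bigr => j; rewrite in_setE => Nj.
by rewrite e.
Qed.

Lemma sum_delta k j : NN j ->
  \sum_(l < n | l \in NN) ab k l * (l == j)%:R = ab k j.
Proof.
move=> Nj; rewrite (bigD1 j) ?in_setE //= eqxx mulr1 big1 ?addr0 //.
by move=> l /andP[_ /negbTE ->]; rewrite mulr0.
Qed.

Lemma hom_rb j : NN j -> hom (rb j).
Proof.
move=> Nj k; rewrite rbB //; congr (- _).
rewrite -(sum_delta k Nj); apply: eq_bigr => l; rewrite in_setE => Nl.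
by rewrite rbN.
Qed.

Lemma hom_lin a c u v : hom u -> hom v -> hom (a *: u + c *: v).
Proof.
move=> hu hv k.
rewrite (eq_bigr (fun j => a * (ab k j * u j 0) + c * (ab k j * v j 0))); last first.
  by move=> j _; rewrite eD !eZ; ring.
rewrite eD !eZ hu hv.
by rewrite big_split /= -!mulr_sumr; ring.
Qed.

Lemma xb_PB : PP xb.
Proof.
split => [k|j Nj]; last by rewrite xbN.
rewrite xbB big1 ?subr0 // => j; rewrite in_setE => Nj.
by rewrite xbN // mulr0.
Qed.

Lemma recc_PB d : recc PP d -> hom d /\ forall j, NN j -> 0 <= d j 0.
Proof.
move=> h; have [h1 h2] := h xb xb_PB 1 ler01.
split => [k|j Nj]; last first.
  by have := h2 j Nj; rewrite eD xbN // scale1r add0r.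
have := h1 k; rewrite eD xbB scale1r.
rewrite (eq_bigr (fun j => ab k j * d j 0)); last first.
  by move=> j; rewrite in_setE => Nj; rewrite eD xbN // add0r.
move=> E; apply: (addrI (bb k 0)); by rewrite E.
Qed.

Lemma PB_rb x j l : PP x -> NN j -> 0 <= l -> PP (x + l *: rb j).
Proof.
move=> [h1 h2] Nj l0; split => [k|i Ni].
  rewrite (eq_bigr (fun i => ab k i * x i 0 + l * (ab k i * (i == j)%:R))); last first.
    by move=> i; rewrite in_setE => Ni; rewrite eD eZ rbN //; ring.
  rewrite eD eZ h1 rbB //.
  by rewrite big_split /= -mulr_sumr sum_delta //; ring.
rewrite eD eZ rbN //; apply: addr_ge0; first exact: h2.
by apply: mulr_ge0 => //; case: (i == j).
Qed.


Lemma entry_le (z : 'cV[R]_n) i : `|z i 0| <= `|z|.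
Proof.
change (`|z i 0| <= mx_norm z); rewrite mx_normrE.
exact: (le_trans _ (le_bigmax _ _ (i, 0))).
Qed.

Lemma closure_near (S : set 'cV[R]_n) x e : closure S x -> 0 < e ->
  exists y, S y /\ `|x - y| < e.
Proof.
move=> cx e0; have [y [Sy By]] := cx _ (nbhsx_ballx x e e0).
by exists y; split => //; move: By; rewrite -ball_normE.
Qed.

Lemma small_eq0 (a M : R) : 0 < M -> (forall e, 0 < e -> `|a| < M * e) -> a = 0.
Proof.
move=> M0 h; apply/eqP; apply: contraT => a0.
have na : 0 < `|a| by rewrite normr_gt0.
have := h (`|a| / M) (divr_gt0 na M0).
by rewrite mulrC divfK ?lt0r_neq0 // ltxx.
Qed.

Lemma PB_closed : closure PP `<=` PP.
Proof.
move=> x cx; split => [k|j Nj]; last first.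
  rewrite leNgt; apply/negP => xneg.
  have xn : 0 < - x j 0 by rewrite oppr_gt0.
  have [y [[_ h2] ny]] := closure_near cx xn.
  have := le_lt_trans (entry_le (x - y) j) ny; rewrite eD eN.
  have := h2 j Nj; move=> yj0 hh.
  have := ler_norm (y j 0 - x j 0); rewrite distrC => hh2.
  lra.
set M := 1 + \sum_(j < n | j \in NN) `|ab k j|.
have M0 : 0 < M by rewrite ltr_pwDl // sumr_ge0.
apply/eqP; rewrite -subr_eq0; apply/eqP; apply: (small_eq0 M0) => e e0.
have [y [[h1 _] ny]] := closure_near cx e0.
have -> : x (sigma k) 0 - (bb k 0 - \sum_(j < n | j \in NN) ab k j * x j 0) =
   (x - y) (sigma k) 0 + \sum_(j < n | j \in NN) ab k j * (x - y) j 0.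
  have -> : \sum_(j < n | j \in NN) ab k j * (x - y) j 0 =
     \sum_(j < n | j \in NN) ab k j * x j 0 - \sum_(j < n | j \in NN) ab k j * y j 0.
    by rewrite -sumrB; apply: eq_bigr => j _; rewrite eD eN; ring.
  rewrite eD eN h1; ring.
apply: (le_lt_trans (ler_normD _ _)).
apply: (@le_lt_trans _ _ (M * `|x - y|)); last by rewrite ltr_pM2l.
rewrite /M mulrDl mul1r mulr_suml.
apply: lerD; first exact: entry_le.
apply: (le_trans (ler_norm_sum _ _ _)); apply: ler_sum => j _.
by rewrite normrM ler_wpM2l ?entry_le.
Qed.



Lemma PB_convex : convex_set_cv PP.
Proof.
move=> x y [hx1 hx2] [hy1 hy2] t t0 t1; split => [k|j Nj].
  have -> : \sum_(j < n | j \in NN) ab k j * (t *: x + (1 - t) *: y) j 0 =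
     t * \sum_(j < n | j \in NN) ab k j * x j 0 + (1 - t) * \sum_(j < n | j \in NN) ab k j * y j 0.
    rewrite !mulr_sumr -big_split; apply: eq_bigr => j _; rewrite eD !eZ /=; ring.
  rewrite eD !eZ hx1 hy1; ring.
rewrite eD !eZ; apply: addr_ge0; apply: mulr_ge0 => //; [exact: hx2|lra|exact: hy2].
Qed.

Lemma sum_delta' (f : 'I_n -> R) j : NN j ->
  \sum_(l < n | l \in NN) f l * (l == j)%:R = f j.
Proof.
move=> Nj; rewrite (bigD1 j) ?in_setE //= eqxx mulr1 big1 ?addr0 //.
by move=> l /andP[_ /negbTE ->]; rewrite mulr0.
Qed.

Lemma hom_add u v : hom u -> hom v -> hom (u + v).
Proof. by move=> hu hv; have := hom_lin 1 1 hu hv; rewrite !scale1r. Qed.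

Lemma hom0 : hom 0.
Proof.
have z i : (0 : 'cV[R]_n) i 0 = 0 by rewrite mxE.
move=> k; rewrite z big1 ?oppr0 // => j _; by rewrite z mulr0.
Qed.

Lemma PB_repr x : PP x -> x = xb + \sum_(j < n | j \in NN) x j 0 *: rb j.
Proof.
move=> [h1 h2].
have H1 : hom (x - xb).
  move=> k; rewrite eD eN xbB h1.
  have -> : \sum_(j < n | j \in NN) ab k j * (x - xb) j 0 =
            \sum_(j < n | j \in NN) ab k j * x j 0.
    by apply: eq_bigr => j; rewrite in_setE => Nj; rewrite eD eN xbN // subr0.
  ring.
have H2 : hom (\sum_(j < n | j \in NN) x j 0 *: rb j).
  apply: (big_ind hom) => //; [exact: hom0|exact: hom_add|].
  move=> j; rewrite in_setE => Nj; have := hom_lin (x j 0) 0 (hom_rb Nj) hom0.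
  by rewrite scaler0 addr0.
have E : x - xb = \sum_(j < n | j \in NN) x j 0 *: rb j.
  apply: hom_unique H1 H2 _ => l Nl.
  rewrite eD eN xbN // subr0 summxE.
  rewrite (eq_bigr (fun j => x j 0 * (j == l)%:R)); first by rewrite sum_delta'.
  by move=> j; rewrite in_setE => Nj; rewrite eZ rbN // eq_sym.
by rewrite -E addrC subrK.
Qed.

Variables (C : set 'cV[R]_n) (D : set 'I_n).
Hypothesis hrecc : recc C `<=` recc PP.
Hypothesis hD : D `<=` N1 A b sigma C `|` N2 A b sigma C.

Local Notation al := (alpha A b sigma C).
Local Notation G := (G_DC A b sigma C D).
Definition U : set 'cV[R]_n :=
  \bigcup_(j in D) [set l *: rb j | l in [set l : R | (al j < l%:E)%E]].

Lemma alphaD j : D j -> [/\ NN j, 0 < fine (al j) & al j = (fine (al j))%:E].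
Proof.
move=> /hD [[Nj [a0 [aoo _]]]|[Nj [a0 [aoo _]]]];
  (split => //; [apply: fine_gt0; by rewrite a0 aoo|by rewrite fineK // gt0_fin_numE]).
Qed.

Definition Hs : set 'cV[R]_n := fun y => (forall l, NN l -> 0 <= y l 0) /\
  (forall l, NN l -> ~ D l -> y l 0 = 0) /\ exists l, [/\ NN l, D l & 0 < y l 0].

Lemma conv_H : conv_hull U `<=` Hs.
Proof.
apply: conv_min.
  move=> x y [x1 [x2 [l [Nl Dl xl]]]] [y1 [y2 [l' [Nl' Dl' yl]]]] t t0 t1.
  split; [|split].
  - move=> k Nk; rewrite eD !eZ; apply: addr_ge0; apply: mulr_ge0 => //;
      [exact: x1|lra|exact: y1].
  - by move=> k Nk nD; rewrite eD !eZ x2 // y2 // !mulr0 addr0.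
  have [->|tp] := eqVneq t 0.
    by exists l'; split => //; rewrite eD !eZ mul0r add0r subr0 mul1r.
  exists l; split => //; rewrite eD !eZ.
  have tpos : 0 < t by rewrite lt0r tp t0.
  have h1 := mulr_gt0 tpos xl.
  have h2 : 0 <= (1 - t) * y l 0 by apply: mulr_ge0; [lra|exact: y1].
  lra.
move=> y [j Dj [l al_l <-]].
have [Nj a0 ae] := alphaD Dj.
have l0 : 0 < l.
  have : (al j < l%:E)%E := al_l.
  by rewrite ae lte_fin => /(lt_trans a0).
split; [|split].
- by move=> k Nk; rewrite eZ rbN //; apply: mulr_ge0; [exact: ltW|case: (k == j)].
- move=> k Nk nD; rewrite eZ rbN //; case: eqP => [e|]; last by rewrite mulr0.
  by rewrite e in nD.
by exists j; split => //; rewrite eZ rbN // eqxx mulr1.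
Qed.

Lemma recc_CG : recc C `<=` recc G.
Proof.
move=> d Cd z [x [Gx [k [Ck ->]]]] l l0.
exists x; split => //; exists (k + l *: d); split; last by rewrite addrA.
by move=> y Cy l' l'0; rewrite scalerDr scalerA addrA; apply: Cd; [exact: Ck|exact: mulr_ge0].
Qed.


Lemma U_conv j l : D j -> (al j < l%:E)%E -> conv_hull U (l *: rb j).
Proof. by move=> Dj hl; apply: sub_conv; exists j => //; exists l. Qed.

Lemma conv_shift i : D i -> forall q, conv_hull U q ->
  forall l, 0 <= l -> conv_hull U (q + l *: rb i).
Proof.
move=> Di; have [Ni ai0 aie] := alphaD Di.
set T := fun y => forall l, 0 <= l -> conv_hull U (y + l *: rb i).
suff : conv_hull U `<=` T by move=> h q /h.
apply: conv_min.
  move=> x y Tx Ty t t0 t1 l l0.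
  have -> : t *: x + (1 - t) *: y + l *: rb i =
     t *: (x + l *: rb i) + (1 - t) *: (y + l *: rb i).
    rewrite !scalerDr !scalerA addrACA -scalerDl.
    by have -> : t * l + (1 - t) * l = l by ring.
  by apply: conv_convex => //; [exact: Tx|exact: Ty].
move=> y [j Dj [mu hmu <-]] l l0.
have [Nj aj0 aje] := alphaD Dj.
have hmu' : fine (al j) < mu.
  have : (al j < mu%:E)%E := hmu.
  by rewrite aje lte_fin.
have mu0 : 0 < mu by apply: lt_trans hmu'.
have [->|lp] := eqVneq l 0.
  by rewrite scale0r addr0; apply: U_conv.
have lpos : 0 < l by rewrite lt0r lp l0.
move: (fine (al i)) ai0 aie => a ai0 aie.
have d0 : 0 < a + l + 1 by lra.
move sE : (l / (a + l + 1)) => s.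
have s0 : 0 < s by rewrite -sE; apply: divr_gt0.
have s1 : s < 1 by rewrite -sE ltr_pdivrMr //; lra.
have t0 : 0 < 1 - s by lra.
have -> : mu *: rb j + l *: rb i =
   (1 - s) *: ((mu / (1 - s)) *: rb j) + (1 - (1 - s)) *: ((a + l + 1) *: rb i).
  rewrite !scalerA; congr (_ *: _ + _ *: _).
    by field; apply: lt0r_neq0.
  by rewrite -sE; field; apply: lt0r_neq0.
apply: conv_convex; [apply: U_conv => //|apply: U_conv => //|lra|lra].
  rewrite aje lte_fin; apply: (lt_le_trans (y := mu)).
    by [].
  rewrite ler_pdivlMr // ler_piMr // ?(ltW mu0) //; lra.
by rewrite aie lte_fin; lra.
Qed.

Lemma recc_ai i : D i -> recc G (fine (al i) *: rb i).
Proof.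
move=> Di z [x [[x0 [-> [q [Uq ->]]]] [k [Ck ->]]]] l l0.
exists (xb + (q + (l * fine (al i)) *: rb i)); split.
  exists xb; split => //; exists (q + (l * fine (al i)) *: rb i); split => //.
  apply: conv_shift => //; apply: mulr_ge0 => //.
  by have [_ /ltW ? _] := alphaD Di.
exists k; split => //.
by rewrite scalerA -!addrA [k + _]addrC.
Qed.


Lemma notG1 (z : 'cV[R]_n) : (forall l, NN l -> D l -> z l 0 <= 0) -> ~ G z.
Proof.
move=> hz [x [[x0 [Ex0 [q [Uq Ex]]]] [k [Ck Ez]]]].
rewrite Ez Ex Ex0 in hz.
have [q1 [q2 [l [Nl Dl ql]]]] := conv_H Uq.
have [_ k2] := recc_PB (hrecc Ck).
have := hz l Nl Dl; rewrite !eD xbN // add0r.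
have := k2 l Nl; lra.
Qed.

Lemma notG2 i j a c : D i -> NN j -> ~ D j ->
  ~ (0 < gamma A b sigma C D i j)%E -> 0 <= a -> 0 < c ->
  ~ G (xb + a *: rb i + c *: rb j).
Proof.
move=> Di Nj nDj ng a0 c0 [x [[x0 [Ex0 [q [Uq Ex]]]] [k [Ck E]]]].
rewrite Ex Ex0 in E.
have [Ni ai0 aie] := alphaD Di.
have [q1 [q2 _]] := conv_H Uq.
have [kh k2] := recc_PB (hrecc Ck).
have ij : i != j by apply/eqP => e; apply: nDj; rewrite -e.
have coord l : NN l -> a * (l == i)%:R + c * (l == j)%:R = q l 0 + k l 0.
  move=> Nl; have := congr1 (fun v : 'cV[R]_n => v l 0) E.
  by rewrite /= !eD !eZ !rbN // xbN // !add0r.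
have kE : k = k i 0 *: rb i + c *: rb j.
  apply: hom_unique kh (hom_lin _ _ (hom_rb Ni) (hom_rb Nj)) _ => l Nl.
  rewrite eD !eZ !rbN //.
  have := coord l Nl.
  have [->|li] := eqVneq l i.
    by move=> _; rewrite (negbTE ij) mulr1 mulr0 addr0.
  have [->|lj] := eqVneq l j.
    move=> e; rewrite mulr1 mulr0 add0r; move: e; rewrite mulr1 mulr0 add0r q2 // add0r => ->//.
  move=> e0; rewrite !mulr0 addr0; move: e0; rewrite !mulr0 addr0 => e0.
  have := q1 l Nl; have := k2 l Nl; lra.
have t0 := k2 i Ni.
move: (k i 0) t0 kE => t t0 kE.
move: (fine (al i)) ai0 aie => ai ai0 aie.
have d0 : 0 < t + ai by lra.
have cc0 : 0 < ai / (t + ai) by apply: divr_gt0.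
have vrec : recc G (ai *: rb i + (ai / (t + ai) * c) *: rb j).
  have -> : ai *: rb i + (ai / (t + ai) * c) *: rb j =
      (ai / (t + ai)) *: k + (ai / (t + ai)) *: (ai *: rb i).
    rewrite kE !scalerDr !scalerA addrAC -scalerDl.
    congr (_ *: _ + _ *: _); field; exact: lt0r_neq0.
  apply: recc_add; apply: recc_scale; try exact: ltW.
    exact: recc_CG.
  by have := recc_ai Di; rewrite aie.
apply: ng; apply: (@lt_le_trans _ _ (ai / (t + ai) * c)%:E).
  by rewrite lte_fin; apply: mulr_gt0.
apply: ereal_sup_ubound; exists (ai / (t + ai) * c) => //; split.
  exact/ltW/mulr_gt0.
by rewrite aie.
Qed.

End Tab.

Unset Implicit Arguments.

Theorem proposition4 (R : realType) (m n : nat) (A : 'M[R]_(m, n)) (b : 'cV[R]_m)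
  (sigma : 'I_m -> 'I_n) (C : set 'cV[R]_n) (D : set 'I_n) :
  \rank A = m ->
  feasible_basis A b sigma ->
  open C -> convex_set_cv C ->
  ~ closure C (xbar A b sigma) ->
  recc C `<=` recc (PB A b sigma) ->
  D `<=` N1 A b sigma C `|` N2 A b sigma C ->
  M_D A b sigma C D = set0 ->
  closure (conv_hull (PB A b sigma `\` G_DC A b sigma C D)) = PB A b sigma.
Proof.
move=> _ [[inj _] _] _ _ _ hrecc hD hM.
have phiex : forall i, exists j, D i ->
    [/\ Nset sigma j, ~ D j & ~ (0 < gamma A b sigma C D i j)%E].
  move=> i; have [Di|nDi] := pselect (D i); last by exists i.
  have nM : ~ M_D A b sigma C D i by rewrite hM.
  apply: contrapT => hne; apply: nM; split => // j Nj nDj.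
  apply: contrapT => ng; apply: hne; exists j => _; by split.
have [phi hphi] := choice phiex.
apply/seteqP; split.
  apply: subset_trans (@PB_closed _ _ _ _ _ _); apply: closureS.
  by apply: conv_min; [exact: PB_convex|move=> x []].
move=> x Px.
set xb := xbar A b sigma.
set rb := rbar A sigma.
set S := PB A b sigma `\` G_DC A b sigma C D.
pose c j := if j \in Nset sigma then x j 0 else 0.
pose e j := if (j \in Nset sigma) && (j \in D) then 1 else 0 : R.
pose y s j := xb + (n.+1%:R * c j) *: rb j + (s * e j) *: rb (phi j).
pose w := n.+1%:R^-1 *: \sum_j e j *: rb (phi j).
have Sxb : S xb.
  split; first exact: xb_PB inj.
  by apply: (notG1 inj hrecc hD) => l Nl _; rewrite xbN.
have Sy : forall s, 0 < s -> forall j, S (y s j).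
  move=> s s0 j; rewrite /y /c /e.
  have [jN|jN] := boolP (j \in Nset sigma); last first.
    by rewrite /= mulr0 mulr0 !scale0r !addr0.
  have Nj : Nset sigma j by rewrite -in_setE.
  have a0 : 0 <= n.+1%:R * x j 0 by apply: mulr_ge0 => //; exact: Px.2.
  have [jD|jD] := boolP (j \in D); rewrite /=.
    have Dj : D j by rewrite -in_setE.
    have [Nphi nDphi ng] := hphi j Dj.
    rewrite mulr1; split.
      apply: (PB_rb inj) Nphi (ltW s0).
      exact: (PB_rb inj (xb_PB _ _ inj) Nj).
    exact: (notG2 inj hrecc hD Dj Nphi nDphi ng a0 s0).
  have nDj : ~ D j by move=> Dj; move/negP: jD; apply; rewrite in_setE.
  rewrite mulr0 scale0r addr0; split; first exact: (PB_rb inj (xb_PB _ _ inj) Nj).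
  apply: (notG1 inj hrecc hD) => l Nl Dl.
  rewrite eD eZ xbN // rbN // add0r.
  have -> : (l == j) = false by apply/eqP => el; apply: nDj; rewrite -el.
  by rewrite mulr0.
have xrep : xb + \sum_j c j *: rb j = x.
  rewrite [RHS](PB_repr inj Px); congr (_ + _); rewrite [RHS]big_mkcond /=.
  by apply: eq_bigr => j _; rewrite /c; case: ifP => _ //; rewrite scale0r.
have Ey : forall s, n.+1%:R^-1 *: (xb + \sum_(j <- enum 'I_n) y s j) = x + s *: w.
  move=> s.
  have -> : \sum_(j <- enum 'I_n) y s j =
      xb *+ n + n.+1%:R *: \sum_j c j *: rb j + s *: \sum_j e j *: rb (phi j).
    rewrite big_enum /= !big_split /= sumr_const card_ord; congr (_ + _ + _);
      by rewrite scaler_sumr; apply: eq_bigr => j _; rewrite scalerA.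
  rewrite -xrep /w.
  have n0 : n.+1%:R != 0 :> R by rewrite pnatr_eq0.
  have -> : xb + (xb *+ n + n.+1%:R *: \sum_j c j *: rb j + s *: \sum_j e j *: rb (phi j)) =
     n.+1%:R *: (xb + \sum_j c j *: rb j) + s *: \sum_j e j *: rb (phi j).
    by rewrite scalerDr (scaler_nat n.+1 xb) (mulrSr xb) !addrA [xb + _]addrC.
  rewrite scalerDr scalerA mulVf // scale1r; congr (_ + _).
  by rewrite !scalerA mulrC.
move=> B /nbhs_ballP [eps eps0 hB].
have w0 : 0 < `|w| + 1 by rewrite ltr_pwDr // normr_ge0.
set s := eps / (`|w| + 1).
have s0 : 0 < s by apply: divr_gt0.
exists (x + s *: w); split.
  rewrite -Ey; have := convex_comb (@conv_convex _ _ S) (sub_conv Sxb) (fun j => sub_conv (Sy s s0 j)) (enum 'I_n).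
  by rewrite size_enum_ord.
apply: hB; rewrite -ball_normE /ball_ /= opprD addrA subrr add0r normrN normrZ gtr0_norm //.
rewrite /s mulrAC ltr_pdivrMr // ltr_pM2l //; lra.
Qed.
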